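(* Let $\mathbf{f} = (f_n)_{n\ge 1}$ be the ordinary paperfolding word over $\{0,1\}$ and let $\rho(n)$ be its abelian complexity function. Then for all integers $n\ge 0$ (with $n\ge1$ in the first relation) the following hold: \begin{align*} \rho(4n) &= \rho(2n),\\ \rho(4n+2) &= \rho(2n+1)+1,\\ \rho(16n+1) &= \rho(8n+1),\\ \rho(16n+c) &= \rho(2n+1)+2 \quad\text{for each } c\in\{3,7,9,13\},\\ \rho(16n+5) &= \rho(4n+1)+2,\\ \rho(16n+11) &= \rho(4n+3)+2,\\ \rho(16n+15) &= \rho(2n+2)+1. \end{align*}
   Context: The ordinary paperfolding word $\mathbf{f}=(f_n)_{n\ge1}$ over $\{0,1\}$ is defined as follows: for $n\ge 1$ write $n=n'2^k$ with $n'$ odd; then $f_n=0$ if $n'\equiv 1 \pmod 4$ and $f_n=1$ if $n'\equiv 3\pmod 4$. Thus $\mathbf{f}=0010011000110110\cdots$. A factor of $\mathbf{f}$ is a finite contiguous block $f_i f_{i+1}\cdots f_{i+n-1}$. Two words $u,v$ over $\{0,1\}$ are abelian equivalent if one is a rearrangement of the other. For $n\ge1$, the abelian complexity $\rho(n)$ is the number of abelian equivalence classes among the factors of $\mathbf{f}$ of length $n$. *)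

(* Defs.v *)
From mathcomp Require Import all_boot.
From mathcomp Require Import boolp.
Set Implicit Arguments. Unset Strict Implicit. Unset Printing Implicit Defensive.

Definition odd_part (n : nat) : nat := n %/ 2 ^ (logn 2 n).

(* ordinary paperfolding word, indexed from 1: f_n = 0 (false) if n' = 1 mod 4,
   f_n = 1 (true) if n' = 3 mod 4 *)
Definition pf (n : nat) : bool := odd_part n %% 4 == 3.

Definition factor (i n : nat) : n.-tuple bool := [tuple pf (i + j) | j < n].

Definition factors (n : nat) : {set n.-tuple bool} :=
  [set w : n.-tuple bool | `[< exists i, 1 <= i /\ w = factor i n >]].

Definition abelian_eq (n : nat) : rel (n.-tuple bool) :=
  fun u v => perm_eq (tval u) (tval v).

Definition rho (n : nat) : nat :=
  #|equivalence_partition (@abelian_eq n) (factors n)|.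

(* Main.v *)
Require Import Defs.
From Stdlib Require Import ZArith Lia FunctionalExtensionality.
From mathcomp Require Import all_boot zify boolp.

Lemma odd_part_double k : 0 < k -> odd_part (2 * k) = odd_part k.
Proof.
move=> k0; rewrite /odd_part lognM // (_ : logn 2 2 = 1); last by [].
by rewrite add1n expnS divnMl.
Qed.

Lemma pf_double k : 0 < k -> pf (2 * k) = pf k.
Proof. by move=> k0; rewrite /pf odd_part_double. Qed.

Lemma pf_odd k : pf (2 * k + 1) = odd k.
Proof.
rewrite /pf /odd_part lognE.
have -> : (2 %| 2 * k + 1) = false.
  by rewrite dvdn_addr ?dvdn_mulr.
rewrite andbF expn0 divn1.
case Hk: (odd k).
- by apply/eqP; lia.
- by apply/negP => /eqP; lia.
Qed.

Fixpoint S (N : nat) : nat := if N is N'.+1 then S N' + pf N else 0.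

Lemma S_succ N : S N.+1 = S N + pf N.+1.
Proof. by []. Qed.

Lemma S_add1 N : S (N + 1) = S N + pf (N + 1).
Proof. by rewrite addn1. Qed.

Lemma S_double z : S (2 * z) = S z + z./2.
Proof.
elim: z => [|z IH] //.
have -> : 2 * z.+1 = (2 * z + 1).+1 by lia.
rewrite S_succ S_add1 IH pf_odd.
have -> : (2 * z + 1).+1 = 2 * z.+1 by lia.
rewrite pf_double // S_succ; lia.
Qed.

Lemma S_odd z : S (2 * z + 1) = S z + z.+1./2.
Proof.
rewrite S_add1 pf_odd S_double; lia.
Qed.

Definition h (N : nat) : Z := (Z.of_nat N - 2 * Z.of_nat (S N))%Z.
Definition ne (x y : bool) : Z := Z.b2z (xorb x y).

Lemma h_rec z (b : bool) : h (2 * z + b) = (h z + ne (odd z) b)%Z.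
Proof.
rewrite /h /ne; case: b; case Hz: (odd z); cbn [xorb Z.b2z nat_of_bool].
- rewrite S_odd; lia.
- rewrite S_odd; lia.
- rewrite addn0 S_double; lia.
- rewrite addn0 S_double; lia.
Qed.

Lemma odd_2b w (b : bool) : odd (2 * w + b) = b.
Proof. by rewrite oddD oddM /=; case: b. Qed.

Lemma half_2b w (b : bool) : (2 * w + b)./2 = w.
Proof. case: b => /=; lia. Qed.

Lemma neC x y : ne x y = ne y x.
Proof. by case: x; case: y. Qed.

Definition vec := bool -> bool -> bool -> Z.
Definition ycar (b r c : bool) := xorb (xorb b r) c.
Definition ccar (b r c : bool) := (b && r) || (c && (b || r)).

Definition term (r : bool) (v : vec) (c p q b : bool) : Z :=
  (ne q (ycar b r c) - ne p b + v (ccar b r c) b (ycar b r c))%Z.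

Definition stepv (r : bool) (v : vec) : vec :=
  fun c p q => Z.max (term r v c p q false) (term r v c p q true).

Definition W0 : vec := fun c p q =>
  if c then (if p then (if q then 2 else 1) else (if q then 1 else 2))%Z
  else ne p q.

Definition g (m : nat) (c p q : bool) (x : nat) : Z :=
  (h (2 * (x + m + c) + q) - h (2 * x + p))%Z.

Lemma carry_id (b r c : bool) : b + r + c = 2 * ccar b r c + ycar b r c.
Proof. by case: b; case: r; case: c. Qed.

Lemma g_rec m c p q x (b : bool) :
  g m c p q (2 * x + b) =
  (ne q (ycar b (odd m) c) - ne p b
    + g (m./2) (ccar b (odd m) c) b (ycar b (odd m) c) x)%Z.
Proof.
rewrite /g.
have E : 2 * x + b + m + c = 2 * (x + m./2 + ccar b (odd m) c) + ycar b (odd m) c.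
  have := carry_id b (odd m) c.
  have : m = 2 * m./2 + odd m by rewrite -[m in LHS](odd_double_half m); lia.
  lia.
rewrite E h_rec odd_2b [h (2 * (2 * x + b) + p)]h_rec odd_2b (neC q) (neC b p); lia.
Qed.

Fixpoint Vf (k m : nat) : vec :=
  match k with
  | 0 => W0
  | k'.+1 => if m is 0 then W0 else stepv (odd m) (Vf k' m./2)
  end.

Definition Vv (m : nat) : vec := Vf m m.

Lemma W0_fix : stepv false W0 = W0.
Proof.
apply: functional_extensionality => c; apply: functional_extensionality => p;
apply: functional_extensionality => q.
by case: c; case: p; case: q; vm_compute.
Qed.

Lemma Vf_stable k1 : forall k2 m, m <= k1 -> m <= k2 -> Vf k1 m = Vf k2 m.
Proof.
elim: k1 => [|k1 IH] k2 m.
  rewrite leqn0 => /eqP -> _; by case: k2.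
case: k2 => [|k2]; first by rewrite leqn0 => _ /eqP ->; case: (k1).
case: m => [|m] //= H1 H2.
rewrite (IH k2) //; lia.
Qed.

Lemma Vf_S k m : Vf k.+1 m.+1 = stepv (odd m.+1) (Vf k (m.+1)./2).
Proof. by []. Qed.

Lemma Vv_rec m (r : bool) : Vv (2 * m + r) = stepv r (Vv m).
Proof.
case E: (2 * m + r) => [|n].
  have -> : m = 0 by lia.
  have -> : r = false by case: r E => //; lia.
  by rewrite /Vv /= W0_fix.
rewrite /Vv Vf_S -E odd_2b half_2b; congr stepv.
apply: Vf_stable; lia.
Qed.

Lemma Vv_rec' m : Vv m = stepv (odd m) (Vv m./2).
Proof.
have E : m = 2 * m./2 + odd m by lia.
by rewrite {1}E Vv_rec.
Qed.

Lemma V_ub_aux N : forall m x c p q, m + x <= N -> (g m c p q x <= Vv m c p q)%Z.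
Proof.
elim: N => [|N IH] m x c p q H.
  have -> : m = 0 by lia.
  have -> : x = 0 by lia.
  apply/Z.leb_le.
  by case: c; case: p; case: q; vm_compute.
have Ex : x = 2 * x./2 + odd x by lia.
rewrite Ex g_rec Vv_rec' /stepv.
have IH' := IH m./2 x./2 (ccar (odd x) (odd m) c) (odd x) (ycar (odd x) (odd m) c).
have : (g m./2 (ccar (odd x) (odd m) c) (odd x) (ycar (odd x) (odd m) c) x./2 <=
    Vv m./2 (ccar (odd x) (odd m) c) (odd x) (ycar (odd x) (odd m) c))%Z.
  case: (boolP (m + x == 0)) => [/eqP H0|H0].
    have -> : m = 0 by lia.
    have -> : x = 0 by lia.
    clear IH' IH Ex H; apply/Z.leb_le.
    by case: c; case: p; case: q; vm_compute.
  apply: IH'; lia.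
rewrite /term; case: (odd x) => /= Hle; lia.
Qed.

Lemma V_ub m x c p q : (g m c p q x <= Vv m c p q)%Z.
Proof. exact: (V_ub_aux (m + x) m x c p q (leqnn (m + x))). Qed.

Lemma V_att m : forall c p q, exists x, g m c p q x = Vv m c p q.
Proof.
elim/ltn_ind: m => m IH c p q.
case: (boolP (m == 0)) => [/eqP ->|m0].
  exists (if c then p && q else p).
  by case: c; case: p; case: q; vm_compute.
rewrite Vv_rec' /stepv.
have [b Hb] : exists b, Z.max (term (odd m) (Vv m./2) c p q false)
                      (term (odd m) (Vv m./2) c p q true) =
                      term (odd m) (Vv m./2) c p q b.
  case: (Z.max_spec (term (odd m) (Vv m./2) c p q false)
                      (term (odd m) (Vv m./2) c p q true)) => [[_ ->]|[_ ->]].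
  - by exists true.
  - by exists false.
rewrite Hb.
have [x' Hx'] := IH m./2 ltac:(lia) (ccar b (odd m) c) b (ycar b (odd m) c).
exists (2 * x' + b); rewrite g_rec Hx' /term; lia.
Qed.

Definition Pfun (r : bool) (v : vec) : Z := Z.max (v false false r) (v r true (~~ r)).
Definition Pf (n : nat) : Z := Pfun (odd n) (Vv n./2).
Definition Delta (n a : nat) : Z := (h (a + n) - h a)%Z.

Lemma Delta_g n x (b : bool) :
  Delta n (2 * x + b) = g n./2 (ccar b (odd n) false) b (ycar b (odd n) false) x.
Proof.
rewrite /Delta /g.
have := carry_id b (odd n) false.
have : n = 2 * n./2 + odd n by lia.
move=> E1 E2.
have -> : 2 * x + b + n = 2 * (x + n./2 + ccar b (odd n) false) + ycar b (odd n) false.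
  by lia.
by [].
Qed.

Lemma P_ub n a : (Delta n a <= Pf n)%Z.
Proof.
have -> : a = 2 * a./2 + odd a by lia.
rewrite Delta_g /Pf /Pfun.
have := V_ub n./2 a./2 (ccar (odd a) (odd n) false) (odd a) (ycar (odd a) (odd n) false).
case: (odd a); case: (odd n); rewrite /ccar /ycar /=; lia.
Qed.

Lemma P_att n : exists a, Delta n a = Pf n.
Proof.
rewrite /Pf /Pfun.
case: (Z.max_spec (Vv n./2 false false (odd n)) (Vv n./2 (odd n) true (~~ odd n)))
  => [[_ ->]|[_ ->]].
- have [x Hx] := V_att n./2 (odd n) true (~~ odd n).
  exists (2 * x + true); rewrite Delta_g -Hx /ccar /ycar; by case: (odd n).
- have [x Hx] := V_att n./2 false false (odd n).
  exists (2 * x + false); rewrite Delta_g -Hx /ccar /ycar; by case: (odd n).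
Qed.

Lemma h_comp K : forall x, x < 2 ^ K -> h (2 ^ K.+1 - 1 - x) = (h x + 1)%Z.
Proof.
elim: K => [|K IH] x Hx.
  have -> : x = 0 by case: x Hx.
  by vm_compute.
have Ex : x = 2 * x./2 + odd x by lia.
have Hy : x./2 < 2 ^ K by rewrite expnS in Hx; lia.
have E : 2 ^ K.+2 - 1 - x = 2 * (2 ^ K.+1 - 1 - x./2) + ~~ odd x.
  rewrite !expnS; rewrite !expnS in Hx; case: (odd x) Ex => /= Ex; lia.
have Hodd : odd (2 ^ K.+1 - 1 - x./2) = ~~ odd x./2.
  have E2 : (2 ^ K.+1 - 1 - x./2) + x./2 = 2 * (2 ^ K - 1) + true.
    rewrite expnS; have : 0 < 2 ^ K by rewrite expn_gt0. lia.
  have := congr1 odd E2; rewrite odd_2b oddD.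
  by case: (odd (2 ^ K.+1 - 1 - x./2)); case: (odd x./2).
rewrite E h_rec IH // Hodd [in h x]Ex h_rec.
case: (odd x./2); case: (odd x); rewrite /ne /=; lia.
Qed.

Lemma Delta_sym n a : exists a', Delta n a' = (- Delta n a)%Z.
Proof.
set K := a + n.
have HK : K < 2 ^ K by apply: ltn_expl.
exists (2 ^ K.+1 - 1 - K).
rewrite /Delta.
have -> : 2 ^ K.+1 - 1 - K + n = 2 ^ K.+1 - 1 - a.
  rewrite expnS; rewrite /K in HK *; lia.
rewrite !h_comp //; last by rewrite /K in HK *; lia.
rewrite /K; lia.
Qed.

Lemma factorE i n : tval (factor i n) = map (fun j => pf (i + j)) (iota 0 n).
Proof. by rewrite /factor /= -val_enum_ord -map_comp. Qed.

Lemma count_bool (a : pred bool) (s : seq bool) :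
  count a s = a true * count id s + a false * (size s - count id s).
Proof.
elim: s => [|x s IH] /=; first by case: (a true); case: (a false).
have := count_size id s.
rewrite IH; case: x; case: (a true); case: (a false) => /=; lia.
Qed.

Lemma abelian_eqE n (u v : n.-tuple bool) :
  abelian_eq u v = (count id u == count id v).
Proof.
rewrite /abelian_eq; apply/idP/idP.
  by move/permP => /(_ id) ->.
move/eqP=> E; apply/permP => a.
by rewrite (count_bool a u) (count_bool a v) E !size_tuple.
Qed.

Lemma card_eqpart_key (T U : finType) (R : rel T) (D : {set T}) (f : T -> U) :
  {in D &, forall x y, R x y = (f x == f y)} ->
  #|equivalence_partition R D| = #|f @: D|.
Proof.
move=> HR.
rewrite /equivalence_partition.
pose Px := fun x => [set y in D | R x y].
have PxE : {in D &, forall x y, (Px x == Px y) = (f x == f y)}.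
  move=> x y Dx Dy; apply/eqP/eqP => E.
    have Hy : y \in Px x by rewrite E /Px /= inE Dy /= (HR y y Dy Dy).
    by move: Hy; rewrite /Px /= inE Dy /= (HR x y Dx Dy) => /eqP.
  apply/setP => z; rewrite /Px /= !inE.
  case Dz: (z \in D) => //=.
  by rewrite (HR x z Dx Dz) (HR y z Dy Dz) E.
pose FG := [set (Px x, f x) | x in D].
have -> : [set [set y in D | R x y] | x in D] = [set z.1 | z in FG].
  by rewrite -imset_comp.
have -> : f @: D = [set z.2 | z in FG].
  by rewrite -imset_comp.
have C1 : #|[set z.1 | z in FG]| = #|FG|.
  apply: card_in_imset.
  move=> z1 z2; rewrite /FG => /imsetP [x Dx ->] /imsetP [y Dy ->] /= E.
  by move: (PxE x y Dx Dy); rewrite E eqxx => /esym/eqP ->.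
have C2 : #|[set z.2 | z in FG]| = #|FG|.
  apply: card_in_imset.
  move=> z1 z2; rewrite /FG => /imsetP [x Dx ->] /imsetP [y Dy ->] /= E.
  by move: (PxE x y Dx Dy); rewrite E eqxx => /eqP ->.
by rewrite C1 C2.
Qed.

Lemma count_factor a n : count id (factor a.+1 n) + S a = S (a + n).
Proof.
rewrite factorE count_map.
elim: n => [|n IH]; first by rewrite addn0.
have -> : iota 0 n.+1 = iota 0 n ++ [:: n] by rewrite -addn1 iotaD.
rewrite count_cat /= addnS S_succ -IH addSn; lia.
Qed.

Lemma cnt_Delta a n :
  Z.of_nat (2 * count id (factor a.+1 n)) = (Z.of_nat n - Delta n a)%Z.
Proof.
have := count_factor a n.
rewrite /Delta /h; lia.
Qed.

Lemma cnt_step a n :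
  count id (factor a.+2 n) <= count id (factor a.+1 n) + 1 /\
  count id (factor a.+1 n) <= count id (factor a.+2 n) + 1.
Proof.
have := count_factor a n; have := count_factor a.+1 n.
rewrite S_succ addSn S_succ.
case: (pf a.+1); case: (pf (a + n).+1) => /=; lia.
Qed.

Lemma ivt (F : nat -> nat) :
  (forall a, F a.+1 <= F a + 1 /\ F a <= F a.+1 + 1) ->
  forall d a j, (F a <= j <= F (a + d)) \/ (F (a + d) <= j <= F a) ->
  exists b, F b = j.
Proof.
move=> HF; elim=> [|d IH] a j H.
  by exists a; rewrite addn0 in H; lia.
case: (eqVneq (F a) j) => [E|NE]; first by exists a.
apply: (IH a.+1 j).
rewrite addSnnS; have := HF a; lia.
Qed.

Lemma ivt2 (F : nat -> nat) :
  (forall a, F a.+1 <= F a + 1 /\ F a <= F a.+1 + 1) ->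
  forall a1 a2 j, F a1 <= j <= F a2 -> exists b, F b = j.
Proof.
move=> HF a1 a2 j H.
case: (leqP a1 a2) => Ha.
  apply: (ivt F HF (a2 - a1) a1 j); rewrite subnKC //; lia.
apply: (ivt F HF (a1 - a2) a2 j); rewrite subnKC; [lia | exact: ltnW].
Qed.

Lemma factorsP n w : reflect (exists a, w = factor a.+1 n) (w \in factors n).
Proof.
rewrite /factors inE; apply: (iffP (asboolP _)).
  by move=> [i [Hi ->]]; exists i.-1; rewrite prednK.
by move=> [a ->]; exists a.+1.
Qed.

Lemma rho_Pf n : Z.of_nat (rho n) = (Pf n + 1)%Z.
Proof.
set cnt := fun a => count id (factor a.+1 n).
have [a1 H1] := P_att n.
have [a2 H2] := Delta_sym n a1.
have Hub := P_ub n.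
have Hlb : forall a, (- Pf n <= Delta n a)%Z.
  move=> a; have [a' Ha'] := Delta_sym n a; have := Hub a'; lia.
have P0 : (0 <= Pf n)%Z by have := Hlb a1; lia.
set Pn := Z.to_nat (Pf n).
set lo := cnt a1.
have cD : forall a, Z.of_nat (2 * cnt a) = (Z.of_nat n - Delta n a)%Z.
  by move=> a; apply: cnt_Delta.
have Hrange : forall a, lo <= cnt a <= lo + Pn.
  move=> a; have := cD a; have := cD a1; have := Hub a; have := Hlb a.
  rewrite /Pn; lia.
have Hhi : cnt a2 = lo + Pn.
  have := cD a2; have := cD a1; rewrite /Pn; lia.
pose key := fun w : n.-tuple bool => (inord (count id w - lo) : 'I_Pn.+1).
rewrite /rho (@card_eqpart_key _ _ _ _ key).
  have -> : key @: factors n = [set: 'I_Pn.+1].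
    apply/setP => j; rewrite inE; apply/imsetP.
    have [b Hb] : exists b, cnt b = lo + j.
      apply: (ivt2 cnt _ a1 a2).
        by move=> a; apply: cnt_step.
      have := ltn_ord j; rewrite Hhi; lia.
    exists (factor b.+1 n); first by apply/factorsP; exists b.
    apply: val_inj; rewrite /key /= inordK.
      by rewrite /cnt in Hb; rewrite Hb; lia.
    rewrite /cnt in Hb; rewrite Hb; have := ltn_ord j; lia.
  rewrite cardsT card_ord /Pn; lia.
move=> x y /factorsP [a ->] /factorsP [b ->].
rewrite abelian_eqE /key.
have := Hrange a; have := Hrange b; rewrite /cnt => Ha Hb.
apply/eqP/eqP.
  by move=> ->.
move/(congr1 (@nat_of_ord _)); rewrite !inordK; lia.
Qed.

Definition pats : seq (seq Z) :=
  [:: [:: 0; -1; -1; -2; -2; -1; -1; -2];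
      [:: 0; -1; -1; 0; -2; -1; -1; -2];
      [:: 0; -1; -1; 0; 0; -1; 1; 0];
      [:: 0; -1; -1; 0; 0; 1; -1; 0];
      [:: 0; -1; -1; 0; 0; 1; 1; 0];
      [:: 0; -1; 1; 0; 0; -1; -1; 0];
      [:: 0; 1; -1; 0; 0; -1; -1; 0];
      [:: 0; 1; 1; 0; 0; -1; -1; 0];
      [:: 0; 1; 1; 0; 0; 1; 1; 2];
      [:: 0; 1; 1; 0; 2; 1; 1; 0];
      [:: 0; 1; 1; 0; 2; 1; 1; 2];
      [:: 0; 1; 1; 2; 0; 1; 1; 0]]%Z.

Definition pat (i : nat) : vec := fun c p q =>
  nth 0%Z (nth [::] pats i) (4 * c + 2 * p + q).

Definition vadd (k : Z) (v : vec) : vec := fun c p q => (k + v c p q)%Z.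

Definition nxt (i : nat) (r : bool) : nat :=
  nth 0 (if r then [:: 1; 1; 11; 4; 11; 4; 0; 0; 2; 3; 4; 1]
         else [:: 6; 7; 8; 7; 8; 7; 9; 9; 10; 10; 10; 5]) i.
Definition off (i : nat) (r : bool) : Z :=
  if r then (if 6 <= i then 2%Z else 0%Z) else (if i == 11 then 2%Z else 0%Z).

Definition states : seq (bool * bool * bool) :=
  [:: (false, false, false); (false, false, true); (false, true, false);
      (false, true, true); (true, false, false); (true, false, true);
      (true, true, false); (true, true, true)].

Definition vec_eqb (v w : vec) : bool :=
  all (fun s => Z.eqb (v s.1.1 s.1.2 s.2) (w s.1.1 s.1.2 s.2)) states.

Lemma vec_eqbP v w : vec_eqb v w = true -> v = w.
Proof.
move=> H.
apply: functional_extensionality => c; apply: functional_extensionality => p;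
apply: functional_extensionality => q.
have /allP /(_ (c, p, q)) : all (fun s => Z.eqb (v s.1.1 s.1.2 s.2) (w s.1.1 s.1.2 s.2)) states by [].
have Hin : (c, p, q) \in states by case: c; case: p; case: q.
by move/(_ Hin)/Z.eqb_eq.
Qed.

Lemma all_iota12 (P : nat -> bool) : all P (iota 0 12) = true -> forall i, i < 12 -> P i.
Proof. move=> /allP H i Hi; apply: H; rewrite mem_iota; lia. Qed.

Definition table_check (i : nat) : bool :=
  [&& vec_eqb (stepv false (pat i)) (vadd (off i false) (pat (nxt i false))),
      vec_eqb (stepv true (pat i)) (vadd (off i true) (pat (nxt i true))),
      nxt i false < 12 & nxt i true < 12].

Lemma table_ok : all table_check (iota 0 12) = true.
Proof. by vm_compute. Qed.

Lemma table i r : i < 12 ->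
  stepv r (pat i) = vadd (off i r) (pat (nxt i r)) /\ nxt i r < 12.
Proof.
move=> Hi; have /and4P [H1 H2 H3 H4] := all_iota12 table_check table_ok i Hi.
by case: r; split => //; apply: vec_eqbP.
Qed.

Lemma stepv_add r k v : stepv r (vadd k v) = vadd k (stepv r v).
Proof.
apply: functional_extensionality => c; apply: functional_extensionality => p;
apply: functional_extensionality => q.
rewrite /stepv /vadd /term; lia.
Qed.

Lemma Pfun_add r k v : Pfun r (vadd k v) = (k + Pfun r v)%Z.
Proof. rewrite /Pfun /vadd; lia. Qed.

Lemma vadd_add k1 k2 v : vadd k1 (vadd k2 v) = vadd (k1 + k2) v.
Proof.
apply: functional_extensionality => c; apply: functional_extensionality => p;
apply: functional_extensionality => q.
rewrite /vadd; lia.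
Qed.

Lemma Vv_inv m : exists i k, i < 12 /\ Vv m = vadd k (pat i).
Proof.
elim/ltn_ind: m => m IH.
case: (boolP (m == 0)) => [/eqP ->|m0].
  exists 10, 0%Z; split => //; apply: vec_eqbP; by vm_compute.
rewrite Vv_rec'.
have [i [k [Hi ->]]] := IH m./2 ltac:(lia).
have [E Hn] := table i (odd m) Hi.
exists (nxt i (odd m)), (k + off i (odd m))%Z; split => //.
by rewrite stepv_add E vadd_add.
Qed.

Definition build n (rs : seq bool) (r : bool) :=
  2 * foldl (fun m (b : bool) => 2 * m + b) n rs + r.
Definition chain (rs : seq bool) (v : vec) := foldl (fun v r => stepv r v) v rs.

Lemma Vv_foldl rs : forall n, Vv (foldl (fun m (b : bool) => 2 * m + b) n rs) = chain rs (Vv n).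
Proof.
elim: rs => [|r rs IH] n //=.
by rewrite IH Vv_rec.
Qed.

Lemma Pf_build n rs r : Pf (build n rs r) = Pfun r (chain rs (Vv n)).
Proof. by rewrite /Pf /build odd_2b half_2b Vv_foldl. Qed.

Lemma chain_add rs : forall k v, chain rs (vadd k v) = vadd k (chain rs v).
Proof.
elim: rs => [|r rs IH] k v //=.
by rewrite stepv_add IH.
Qed.

Definition relcheck rs1 r1 rs2 r2 d :=
  all (fun i => Z.eqb (Pfun r1 (chain rs1 (pat i))) (Pfun r2 (chain rs2 (pat i)) + d))
    (iota 0 12).

Lemma rel_ok rs1 r1 rs2 r2 d : relcheck rs1 r1 rs2 r2 d = true ->
  forall n, Pf (build n rs1 r1) = (Pf (build n rs2 r2) + d)%Z.
Proof.
move=> H n.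
have [i [k [Hi E]]] := Vv_inv n.
have := all_iota12 _ H i Hi => /Z.eqb_eq.
rewrite !Pf_build E !chain_add !Pfun_add; lia.
Qed.

Lemma rho_rel rs1 r1 rs2 r2 d : relcheck rs1 r1 rs2 r2 (Z.of_nat d) = true ->
  forall n, rho (build n rs1 r1) = rho (build n rs2 r2) + d.
Proof.
move=> H n.
have := @rel_ok rs1 r1 rs2 r2 (Z.of_nat d) H n.
have := rho_Pf (build n rs1 r1); have := rho_Pf (build n rs2 r2); lia.
Qed.

Definition J : seq (nat * nat * nat) :=
  [:: (0,7,0); (0,8,0); (1,9,0); (1,10,0); (2,5,2); (3,6,2); (4,7,2); (4,8,2);
      (4,9,2); (5,1,2); (6,1,2); (7,1,2); (7,4,2); (8,11,2); (9,0,4); (10,2,4);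
      (10,3,4); (10,4,4); (11,7,2); (11,9,2); (11,10,2)].

Definition ev_check (i : nat) : bool :=
  (Z.leb 0 (off i true - off i false + 2)) &&
  ((nxt i false, nxt i true, Z.to_nat (off i true - off i false + 2)) \in J).

Definition od_check (t : nat * nat * nat) : bool :=
  let: (i, j, e) := t in
  [&& i < 12, j < 12,
      Z.leb 0 (Z.of_nat e + off j false - off i true) &
      ((nxt i true, nxt j false, Z.to_nat (Z.of_nat e + off j false - off i true)) \in J)].

Lemma ev_ok : all ev_check (iota 0 12) = true.
Proof. by vm_compute. Qed.

Lemma od_ok : all od_check J = true.
Proof. by vm_compute. Qed.

Definition jinv n := exists i j e k, (i, j, e) \in J /\
  Vv n = vadd k (pat i) /\ Vv n.+1 = vadd (k + Z.of_nat e - 2)%Z (pat j).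

Lemma Vv_jinv n : jinv n.
Proof.
elim/ltn_ind: n => n IH.
case: (boolP (n == 0)) => [/eqP ->|n0].
  exists 10, 4, 4, 0%Z; split => //; split.
    by apply: vec_eqbP; vm_compute.
  rewrite (_ : 1 = 2 * 0 + true) // Vv_rec.
  by apply: vec_eqbP; vm_compute.
have En : n = 2 * n./2 + odd n by lia.
have Hm : n./2 < n by lia.
move: En; case Ho: (odd n) => En.
- have [i [j [e [k [Hj [E1 E2]]]]]] := IH _ Hm.
  have := od_ok; move/allP => /(_ _ Hj); rewrite /od_check.
  move=> /and4P [Hi Hjj Hle Hin].
  have [T1 _] := table i true Hi.
  have [T2 _] := table j false Hjj.
  exists (nxt i true), (nxt j false),
    (Z.to_nat (Z.of_nat e + off j false - off i true)), (k + off i true)%Z.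
  split => //; split.
    by rewrite En Vv_rec E1 stepv_add T1 vadd_add.
  rewrite (_ : n.+1 = 2 * (n./2).+1 + false); last by rewrite /=; lia.
  rewrite Vv_rec E2 stepv_add T2 vadd_add; congr vadd.
  move/Z.leb_le: Hle; lia.
- have [i [k [Hi E1]]] := Vv_inv n./2.
  have /andP [Hle Hin] := all_iota12 _ ev_ok i Hi.
  have [T1 _] := table i false Hi.
  have [T2 _] := table i true Hi.
  exists (nxt i false), (nxt i true),
    (Z.to_nat (off i true - off i false + 2)), (k + off i false)%Z.
  split => //; split.
    by rewrite En Vv_rec E1 stepv_add T1 vadd_add.
  rewrite (_ : n.+1 = 2 * n./2 + true); last by rewrite /=; lia.
  rewrite Vv_rec E1 stepv_add T2 vadd_add; congr vadd.
  move/Z.leb_le: Hle; lia.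
Qed.

Definition lastcheck (t : nat * nat * nat) : bool :=
  let: (i, j, e) := t in
  Z.eqb (Pfun true (chain [:: true; true; true] (pat i)))
        (Pfun false (pat j) + Z.of_nat e - 2 + 1).

Lemma last_ok : all lastcheck J = true.
Proof. by vm_compute. Qed.

Lemma rho_last n : rho (16 * n + 15) = rho (2 * n + 2) + 1.
Proof.
have [i [j [e [k [Hj [E1 E2]]]]]] := Vv_jinv n.
have := last_ok; move/allP => /(_ _ Hj); rewrite /lastcheck => /Z.eqb_eq H.
have P1 : Pf (16 * n + 15) = (k + Pfun true (chain [:: true; true; true] (pat i)))%Z.
  rewrite (_ : 16 * n + 15 = build n [:: true; true; true] true); last by rewrite /build /=; lia.
  by rewrite Pf_build E1 chain_add Pfun_add.
have P2 : Pf (2 * n + 2) = (k + Z.of_nat e - 2 + Pfun false (pat j))%Z.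
  rewrite (_ : 2 * n + 2 = build n.+1 [::] false); last by rewrite /build /=; lia.
  by rewrite Pf_build /= E2 Pfun_add.
have := rho_Pf (16 * n + 15); have := rho_Pf (2 * n + 2); lia.
Qed.

Lemma rel_gen rs1 r1 rs2 r2 d n a b :
  relcheck rs1 r1 rs2 r2 (Z.of_nat d) = true ->
  a = build n rs1 r1 -> b = build n rs2 r2 -> rho a = rho b + d.
Proof. by move=> H -> ->; apply: rho_rel. Qed.

Theorem theorem2 (n : nat) :
  (1 <= n -> rho (4 * n) = rho (2 * n)) /\
  rho (4 * n + 2) = rho (2 * n + 1) + 1 /\
  rho (16 * n + 1) = rho (8 * n + 1) /\
  (forall c, c \in [:: 3; 7; 9; 13] -> rho (16 * n + c) = rho (2 * n + 1) + 2) /\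
  rho (16 * n + 5) = rho (4 * n + 1) + 2 /\
  rho (16 * n + 11) = rho (4 * n + 3) + 2 /\
  rho (16 * n + 15) = rho (2 * n + 2) + 1.
Proof.
split.
  move=> _; rewrite -[rho (2 * n)]addn0.
  apply: (@rel_gen [:: false] false [::] false 0 n); [by vm_compute | rewrite /build /=; lia ..].
split.
  apply: (@rel_gen [:: true] false [::] true 1 n); [by vm_compute | rewrite /build /=; lia ..].
split.
  rewrite -[rho (8 * n + 1)]addn0.
  apply: (@rel_gen [:: false; false; false] true [:: false; false] true 0 n);
    [by vm_compute | rewrite /build /=; lia ..].
split.
  move=> c; rewrite !inE => /orP [/eqP ->|/orP [/eqP ->|/orP [/eqP ->|/eqP ->]]] //.
  - apply: (@rel_gen [:: false; false; true] true [::] true 2 n);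
      [by vm_compute | rewrite /build /=; lia ..].
  - apply: (@rel_gen [:: false; true; true] true [::] true 2 n);
      [by vm_compute | rewrite /build /=; lia ..].
  - apply: (@rel_gen [:: true; false; false] true [::] true 2 n);
      [by vm_compute | rewrite /build /=; lia ..].
  - apply: (@rel_gen [:: true; true; false] true [::] true 2 n);
      [by vm_compute | rewrite /build /=; lia ..].
split.
  apply: (@rel_gen [:: false; true; false] true [:: false] true 2 n);
    [by vm_compute | rewrite /build /=; lia ..].
split.
  apply: (@rel_gen [:: true; false; true] true [:: true] true 2 n);
    [by vm_compute | rewrite /build /=; lia ..].
exact: rho_last.
Qed.
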